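(* Let $K$ and $L$ be $n$-element finite sets, $M=K\times L$, and let $u=(u_{kl})$ be a unitary matrix indexed by $K\times L$ all of whose entries are nonzero. Let $G$ be a symmetry group of $u$ and $R$ the associated representation of $G$ on $F(M)$ (as defined in the context). Then the Berezin transform $I_u$ commutes with $R$: $I_uR_g=R_gI_u$ for all $g\in G$.
   Context: For a finite set $J$, $F(J)$ denotes the space of complex-valued functions on $J$, with standard Hermitian product. For $f=(f_{kl})\in F(M)$, $C_uf$ and $D_uf$ are the operators on $F(K)$ with matrices $x_{kk'}=\sum_{l\in L}u_{kl}f_{kl}\bar u_{k'l}$ and $y_{kk'}=\sum_{l\in L}u_{kl}f_{k'l}\bar u_{k'l}$ respectively; these maps are linear bijections $F(M)\to\operatorname{End}F(K)$, and the Berezin transform is $I_u=C_u^{-1}D_u$, explicitly $(I_uf)_{kl}=\sum_{k',l'}\frac{u_{kl'}u_{k'l}}{u_{kl}u_{k'l'}}f_{k'l'}|u_{k'l'}|^2$. Let $\mathcal U:F(L)\to F(K)$ be $(\mathcal U\psi)_k=\sum_{l}u_{kl}\psi_l$. A group $G$ is called a symmetry group of $u$ if $G$ acts on the left on the sets $K$ and $L$, and there are faithful unitary representations $S$ on $F(K)$ and $T$ on $F(L)$ of the form $(S_g\varphi)_k=a_k(g)\varphi_{g^{-1}k}$, $(T_g\psi)_l=b_l(g)\psi_{g^{-1}l}$, where $|a_k(g)|=|b_l(g)|=1$, such that $S_g\mathcal U=\mathcal U T_g$ for all $g\in G$. The representation $R$ of $G$ on $F(M)$ is $(R_gf)_{kl}=f_{g^{-1}k\,g^{-1}l}$.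 *)

(* Defs.v *)
From mathcomp Require Import all_boot all_order all_algebra.
Set Implicit Arguments. Unset Strict Implicit. Unset Printing Implicit Defensive.
Import Order.TTheory GRing.Theory Num.Theory.
Local Open Scope ring_scope.

(* Scalars: C is an arbitrary numeric algebraically closed field with
   conjugation (the complex numbers are the intended instance).
   F(J) is modelled as the function type J -> C. *)

Definition unitary_mat (C : numClosedFieldType) (K L : finType)
  (u : K -> L -> C) : Prop :=
  (forall k k' : K, \sum_(l : L) u k l * (u k' l)^* = (k == k')%:R) /\
  (forall l l' : L, \sum_(k : K) (u k l)^* * u k l' = (l == l')%:R).

Definition Uop (C : numClosedFieldType) (K L : finType) (u : K -> L -> C)
  (psi : L -> C) : K -> C := fun k => \sum_(l : L) u k l * psi l.

Definition berezin (C : numClosedFieldType) (K L : finType) (u : K -> L -> C)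
  (f : K -> L -> C) : K -> L -> C :=
  fun k l => \sum_(k' : K) \sum_(l' : L)
     (u k l' * u k' l) / (u k l * u k' l') * f k' l' * `|u k' l'| ^+ 2.

Definition group_axioms (G : Type) (mul : G -> G -> G) (one : G) (inv : G -> G)
  : Prop :=
  (forall x y z, mul x (mul y z) = mul (mul x y) z) /\
  (forall x, mul one x = x) /\
  (forall x, mul (inv x) x = one).

Definition left_action (G X : Type) (mul : G -> G -> G) (one : G)
  (act : G -> X -> X) : Prop :=
  (forall x, act one x = x) /\
  (forall g h x, act (mul g h) x = act g (act h x)).

Definition monop (C : numClosedFieldType) (G : Type) (X : Type) (inv : G -> G)
  (act : G -> X -> X) (a : X -> G -> C) (g : G) (phi : X -> C) : X -> C :=
  fun x => a x g * phi (act (inv g) x).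

Definition faithful_unitary_monrep (C : numClosedFieldType) (G X : Type)
  (mul : G -> G -> G) (one : G) (inv : G -> G)
  (act : G -> X -> X) (a : X -> G -> C) : Prop :=
  (forall x g, `|a x g| = 1) /\
  (forall phi, monop inv act a one phi = phi) /\
  (forall g h phi, monop inv act a (mul g h) phi
                   = monop inv act a g (monop inv act a h phi)) /\
  (forall g h, (forall phi, monop inv act a g phi = monop inv act a h phi) ->
               g = h).

Definition symmetry_group (C : numClosedFieldType) (K L : finType)
  (u : K -> L -> C) (G : Type) (mul : G -> G -> G) (one : G) (inv : G -> G)
  (actK : G -> K -> K) (actL : G -> L -> L)
  (a : K -> G -> C) (b : L -> G -> C) : Prop :=
  group_axioms mul one inv /\
  left_action mul one actK /\ left_action mul one actL /\
  faithful_unitary_monrep mul one inv actK a /\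
  faithful_unitary_monrep mul one inv actL b /\
  (forall g psi, monop inv actK a g (Uop u psi) = Uop u (monop inv actL b g psi)).

Definition Rop (C : numClosedFieldType) (G : Type) (K L : Type) (inv : G -> G)
  (actK : G -> K -> K) (actL : G -> L -> L) (g : G) (f : K -> L -> C)
  : K -> L -> C :=
  fun k l => f (actK (inv g) k) (actL (inv g) l).

(* Main.v *)
Require Import Defs.
From mathcomp Require Import all_boot all_order all_algebra.
From mathcomp Require Import ring.
From Stdlib Require Import FunctionalExtensionality.
Import Order.TTheory GRing.Theory Num.Theory.
Local Open Scope ring_scope.

Lemma grp_rinv (G : Type) (mul : G -> G -> G) (one : G) (inv : G -> G) :
  group_axioms mul one inv -> forall x, mul x (inv x) = one.
Proof.
move=> [As [Id Iv]] x.
rewrite -[LHS]Id -{1}(Iv (inv x)) -As (As (inv x) x (inv x)) Iv Id.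
by rewrite Iv.
Qed.

Theorem corollary3p3 (C : numClosedFieldType) (K L : finType) (n : nat)
  (HK : #|K| = n) (HL : #|L| = n)
  (u : K -> L -> C) (Hu : unitary_mat u) (Hnz : forall k l, u k l != 0)
  (G : Type) (mul : G -> G -> G) (one : G) (inv : G -> G)
  (actK : G -> K -> K) (actL : G -> L -> L)
  (a : K -> G -> C) (b : L -> G -> C)
  (Hsym : symmetry_group u mul one inv actK actL a b) :
  forall (g : G) (f : K -> L -> C),
    berezin u (Rop inv actK actL g f) = Rop inv actK actL g (berezin u f).
Proof.
move=> g f.
case: Hsym => Hgr [[aK1 aKM] [[aL1 aLM] [[Ha _] [[Hb _] Hmon]]]].
have rinv := @grp_rinv _ _ _ _ Hgr.
have linv : forall x, mul (inv x) x = one by case: Hgr => _ [].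
have gK : forall z, actK g (actK (inv g) z) = z.
  by move=> z; rewrite -aKM rinv aK1.
have Kg : forall z, actK (inv g) (actK g z) = z.
  by move=> z; rewrite -aKM linv aK1.
have gL : forall z, actL g (actL (inv g) z) = z.
  by move=> z; rewrite -aLM rinv aL1.
have Lg : forall z, actL (inv g) (actL g z) = z.
  by move=> z; rewrite -aLM linv aL1.
have anz : forall x h, a x h != 0.
  by move=> x h; rewrite -normr_eq0 Ha oner_eq0.
have bnz : forall x h, b x h != 0.
  by move=> x h; rewrite -normr_eq0 Hb oner_eq0.
have key : forall x y, u (actK g x) (actL g y) * b (actL g y) g
                       = a (actK g x) g * u x y.
  move=> x y.
  have := congr1 (fun h => h (actK g x)) (Hmon g (fun l => (l == y)%:R)).
  rewrite /monop /Uop /= Kg.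
  rewrite (bigD1 y) //= eqxx mulr1 big1 ?addr0; last first.
    by move=> l /negbTE ->; rewrite mulr0.
  rewrite (bigD1 (actL g y)) //= Lg eqxx mulr1 big1 ?addr0; last first.
    move=> l Hl; case: eqP => [E|]; last by rewrite !mulr0.
    by move: Hl; rewrite -E gL eqxx.
  by move=> ->.
have rel : forall x y, u (actK g x) (actL g y)
    = a (actK g x) g * u x y * (b (actL g y) g)^-1.
  move=> x y; rewrite -key mulrK //; exact: unitf_gt0 || by rewrite unitfE.
have term : forall K0 L0 x y,
  u (actK g K0) (actL g y) * u (actK g x) (actL g L0)
    / (u (actK g K0) (actL g L0) * u (actK g x) (actL g y)) * f x y
    * `|u (actK g x) (actL g y)| ^+ 2
  = u K0 y * u x L0 / (u K0 L0 * u x y) * f x y * `|u x y| ^+ 2.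
  move=> K0 L0 x y.
  rewrite !rel !normrM normrV ?unitfE // Hb Ha invr1 !mulr1 !mul1r.
  congr (_ * _ * _).
  have h1 := anz (actK g K0) g; have h2 := anz (actK g x) g.
  have h3 := bnz (actL g y) g; have h4 := bnz (actL g L0) g.
  have h5 := Hnz K0 L0; have h6 := Hnz x y.
  by field; rewrite ?h1 ?h2 ?h3 ?h4 ?h5 ?h6 //= ?mulf_neq0 ?invr_eq0.
apply: functional_extensionality => k; apply: functional_extensionality => l.
rewrite /berezin /Rop.
rewrite [RHS](reindex_inj (can_inj gK)) /=.
apply: eq_bigr => k' _.
rewrite [RHS](reindex_inj (can_inj gL)) /=.
apply: eq_bigr => l' _.
by rewrite -term !gK !gL.
Qed.
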